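(* Let $B=\bigoplus_{i\in\mathbb{Z}}B_i$ be a $\mathbb{Z}$-graded noetherian integral domain with $e(B)=1$, and suppose $B=B_0[x_1,\dots,x_n]$ with $n\ge2$, where each $x_i\neq0$ is homogeneous of degree $d_i\in\mathbb{Z}\setminus\{0\}$. Let $e_i=\gcd(d_1,\dots,\widehat{d_i},\dots,d_n)$ for $1\le i\le n$; let $U=\{i: 1\le i\le n,\ x_i \text{ is a unit of } B\}$ and $U^c=\{1,\dots,n\}\setminus U$; let $E$ be the set of prime factors of $\prod_{i\in U^c}e_i$ ($E=\emptyset$ if $U^c=\emptyset$). Then: (a) $E\subseteq\Pi(B)$; (b) if $U\neq\emptyset$, then every element of $\Pi(B)$ is a prime factor of $\gcd\{d_i: i\in U\}$; (c) if no height-$1$ prime ideal of $B$ contains $\bigcup_{i\in\mathbb{Z}\setminus\{0\}}B_i$, then every element of $\Pi(B)$ is a prime factor of $d_1\cdots d_n$; (d) if for every pair of distinct $i,j\in\{1,\dots,n\}$ no height-$1$ prime ideal of $B$ contains $\{x_i,x_j\}$, then $\Pi(B)=E$.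
   Context: For a $\mathbb{Z}$-graded domain $C$, $e(C)=\gcd\{i\in\mathbb{Z}:C_i\neq0\}$. $\Pi(B)$ is the set of primes $p$ with $p\mid e(B/\mathfrak{p})$ for some homogeneous height-$1$ prime ideal $\mathfrak{p}$ of $B$. *)

(* Defs.v *)
From mathcomp Require Import all_boot all_order all_algebra.
Set Implicit Arguments. Unset Strict Implicit. Unset Printing Implicit Defensive.
Import Order.TTheory GRing.Theory Num.Theory.
Local Open Scope ring_scope.

Section Defs.
Variable B : comNzRingType.

(* G i is the degree-i component B_i of a Z-grading; B = (+)_i B_i. *)
Definition is_graded (G : int -> B -> Prop) : Prop :=
  [/\ forall i, G i 0,
      forall i a b, G i a -> G i b -> G i (a - b),
      forall i j a b, G i a -> G j b -> G (i + j) (a * b),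
      forall a, exists (s : seq int) (f : int -> B),
          [/\ uniq s, forall i, G i (f i) & a = \sum_(i <- s) f i]
    & forall (s : seq int) (f : int -> B), uniq s -> (forall i, G i (f i)) ->
          \sum_(i <- s) f i = 0 -> forall i, i \in s -> f i = 0].

Definition subP (P Q : B -> Prop) := forall a, P a -> Q a.
Definition ssubP (P Q : B -> Prop) := subP P Q /\ exists a, Q a /\ ~ P a.

Definition is_ideal (I : B -> Prop) : Prop :=
  [/\ I 0, forall a b, I a -> I b -> I (a + b) & forall r a, I a -> I (r * a)].

Definition is_prime_ideal (I : B -> Prop) : Prop :=
  [/\ is_ideal I, ~ I 1 & forall a b, I (a * b) -> I a \/ I b].

Definition prime_chain_to (P : B -> Prop) (n : nat) : Prop :=
  exists C : nat -> B -> Prop,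
    [/\ forall k, (k <= n)%N -> is_prime_ideal (C k),
        forall k, (k < n)%N -> ssubP (C k) (C k.+1)
      & forall a, C n a <-> P a].

Definition height_one (P : B -> Prop) : Prop :=
  [/\ is_prime_ideal P, prime_chain_to P 1 & ~ prime_chain_to P 2].

Definition noetherian : Prop :=
  forall C : nat -> B -> Prop, (forall k, is_ideal (C k)) ->
    (forall k, subP (C k) (C k.+1)) ->
    exists N, forall k, (N <= k)%N -> subP (C k) (C N).

Definition is_homogeneous (G : int -> B -> Prop) (I : B -> Prop) : Prop :=
  forall (a : B) (s : seq int) (f : int -> B), uniq s -> (forall i, G i (f i)) ->
    a = \sum_(i <- s) f i -> I a -> forall i, i \in s -> I (f i).

Definition generated_by (G : int -> B -> Prop) (n : nat) (x : 'I_n -> B) : Prop :=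
  forall S : B -> Prop,
    S 1 -> (forall a b, S a -> S b -> S (a - b)) -> (forall a b, S a -> S b -> S (a * b)) ->
    (forall a, G 0 a -> S a) -> (forall i, S (x i)) -> forall a, S a.

End Defs.

Definition is_gcd_of (S : int -> Prop) (d : nat) : Prop :=
  (forall i, S i -> (d %| absz i)%N) /\
  (forall m : nat, (forall i, S i -> (m %| absz i)%N) -> (m %| d)%N).

(* e(B/P) = d, where (B/P)_i = image of B_i *)
Definition e_quot (B : comNzRingType) (G : int -> B -> Prop) (P : B -> Prop) (d : nat) : Prop :=
  is_gcd_of (fun i => exists b, G i b /\ ~ P b) d.

Definition e_ring (B : comNzRingType) (G : int -> B -> Prop) (d : nat) : Prop :=
  is_gcd_of (fun i => exists b, G i b /\ b <> 0) d.

Definition PiB (B : comNzRingType) (G : int -> B -> Prop) (p : nat) : Prop :=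
  prime p /\ exists P : B -> Prop,
    [/\ height_one P, is_homogeneous G P & exists e, e_quot G P e /\ (p %| e)%N].

Definition ecoef (n : nat) (d : 'I_n -> int) (i : 'I_n) : nat :=
  \big[gcdn/0%N]_(j | j != i) absz (d j).

(* Main.v *)
Require Import Defs.
From Stdlib Require Import Classical ClassicalEpsilon.
From mathcomp Require Import all_boot all_order all_algebra.
From mathcomp Require Import ring zify fingroup perm.
Import GRing.Theory Num.Theory Order.TTheory.
Local Open Scope ring_scope.
Set Implicit Arguments. Unset Strict Implicit. Unset Printing Implicit Defensive.

Lemma nall (T : Type) (P : T -> Prop) : ~ (forall x, P x) -> exists x, ~ P x.
Proof. exact: not_all_ex_not. Qed.
Lemma nimp (P Q : Prop) : ~ (P -> Q) -> P /\ ~ Q.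
Proof. exact: imply_to_and. Qed.

Section Ideals.
Variable B : idomainType.
Implicit Types I J K : B -> Prop.

Lemma pi0 I : is_ideal I -> I 0.
Proof. by case. Qed.
Lemma piD I a b : is_ideal I -> I a -> I b -> I (a + b).
Proof. by case=> _ h _; apply: h. Qed.
Lemma piMl I r a : is_ideal I -> I a -> I (r * a).
Proof. by case=> _ _ h; apply: h. Qed.
Lemma piMr I r a : is_ideal I -> I a -> I (a * r).
Proof. by move=> hI ha; rewrite mulrC; apply: piMl. Qed.
Lemma piN I a : is_ideal I -> I a -> I (- a).
Proof. by move=> hI ha; rewrite -mulN1r; apply: piMl. Qed.
Lemma piB I a b : is_ideal I -> I a -> I b -> I (a - b).
Proof. by move=> hI ha hb; apply: piD => //; apply: piN. Qed.
Lemma pisum I (T : Type) (s : seq T) (P : pred T) F : is_ideal I ->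
  (forall i, P i -> I (F i)) -> I (\sum_(i <- s | P i) F i).
Proof. move=> hI hF; apply: big_ind => //; [exact: pi0| move=> ??; exact: piD]. Qed.
Lemma pi1 I a : is_ideal I -> I 1 -> I a.
Proof. by move=> hI h1; rewrite -(mulr1 a); apply: piMl. Qed.
Lemma ideal_ext I J : is_ideal I -> (forall a, I a <-> J a) -> is_ideal J.
Proof.
move=> [h0 hD hM] e; split; first by apply/e.
- by move=> a b /e ha /e hb; apply/e; apply: hD.
- by move=> r a /e ha; apply/e; apply: hM.
Qed.

Lemma prime_prod_notin I (T : Type) (s : seq T) F : is_prime_ideal I ->
  (forall i, ~ I (F i)) -> ~ I (\prod_(i <- s) F i).
Proof.
case=> _ h1 hp hF; apply: (big_ind (fun z => ~ I z)) => //.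
by move=> a b ha hb /hp [].
Qed.

Definition zeroI : B -> Prop := fun a => a = 0.
Lemma zeroI_ideal : is_ideal zeroI.
Proof.
rewrite /zeroI; split => //; first by move=> a b -> ->; rewrite addr0.
by move=> r a ->; rewrite mulr0.
Qed.
Lemma zeroI_prime : is_prime_ideal zeroI.
Proof.
split; first exact: zeroI_ideal; first by rewrite /zeroI; apply/eqP; exact: oner_neq0.
by rewrite /zeroI => a b /eqP; rewrite mulf_eq0 => /orP [] /eqP; [left|right].
Qed.

Definition addgen I u : B -> Prop := fun z => exists i r, I i /\ z = i + r * u.
Lemma addgen_ideal I u : is_ideal I -> is_ideal (addgen I u).
Proof.
move=> hI; split.
- by exists 0, 0; split; [exact: pi0| rewrite mul0r addr0].
- move=> a b [i [r [hi ->]]] [j [t [hj ->]]]; exists (i + j), (r + t); split; first exact: piD.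
  ring.
- move=> c a [i [r [hi ->]]]; exists (c * i), (c * r); split; first exact: piMl.
  ring.
Qed.
Lemma addgen_sub I u : is_ideal I -> subP I (addgen I u).
Proof. by move=> hI a ha; exists a, 0; rewrite mul0r addr0. Qed.
Lemma addgen_gen I u : is_ideal I -> addgen I u u.
Proof. by move=> hI; exists 0, 1; rewrite mul1r add0r; split => //; exact: pi0. Qed.
Lemma addgen_min I J u : is_ideal J -> subP I J -> J u -> subP (addgen I u) J.
Proof. by move=> hJ hIJ hu z [i [r [hi ->]]]; apply: piD => //; [apply: hIJ| apply: piMl]. Qed.

Definition sumI I J : B -> Prop := fun z => exists u v, I u /\ J v /\ z = u + v.
Lemma sumI_ideal I J : is_ideal I -> is_ideal J -> is_ideal (sumI I J).
Proof.
move=> hI hJ; split.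
- by exists 0, 0; rewrite addr0; split; [exact: pi0| split => //; exact: pi0].
- move=> a b [u [v [hu [hv ->]]]] [u' [v' [hu' [hv' ->]]]]; exists (u + u'), (v + v').
  split; first exact: piD. split; first exact: piD. ring.
- move=> c a [u [v [hu [hv ->]]]]; exists (c * u), (c * v); split; first exact: piMl.
  split; first exact: piMl. ring.
Qed.

Definition principal u : B -> Prop := fun z => exists r, z = r * u.
Lemma principal_ideal u : is_ideal (principal u).
Proof.
split; first by exists 0; rewrite mul0r.
- by move=> a b [r ->] [t ->]; exists (r + t); rewrite mulrDl.
- by move=> c a [r ->]; exists (c * r); rewrite mulrA.
Qed.

Definition gtI I J := [/\ is_ideal I, is_ideal J & ssubP J I].

Lemma wf_gtI : noetherian B -> well_founded gtI.
Proof.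
move=> hN I; apply: NNPP => nA.
have step : forall K, ~ Acc gtI K -> exists K', gtI K' K /\ ~ Acc gtI K'.
  move=> K nK; apply: NNPP => h; apply: nK; constructor => K' hK'.
  by apply: NNPP => nK'; apply: h; exists K'.
pose T := {K | ~ Acc gtI K}.
have f : forall t : T, {t' : T | gtI (proj1_sig t') (proj1_sig t)}.
  move=> [K nK]; have [K' [h1 h2]] := constructive_indefinite_description _ (step K nK).
  by exists (exist _ K' h2).
pose seqT := fix sq (k : nat) : T := if k is k'.+1 then proj1_sig (f (sq k')) else exist _ I nA.
pose C k := proj1_sig (seqT k).
have hC : forall k, gtI (C k.+1) (C k) by move=> k; rewrite /C /=; exact: (proj2_sig (f (seqT k))).
have [N hNk] := hN C (fun k => (let: And3 _ h _ := hC k in h)) (fun k => (let: And3 _ _ (conj h _) := hC k in h)).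
have [_ _ [_ [a [ha hna]]]] := hC N.
by apply: hna; apply: (hNk N.+1).
Qed.

Definition span (l : seq B) : B -> Prop :=
  fun a => exists c : nat -> B, a = \sum_(i < size l) c i * l`_i.

Lemma span_ideal l : is_ideal (span l).
Proof.
split.
- by exists (fun _ => 0); rewrite big1 // => i _; rewrite mul0r.
- move=> a b [c ->] [c' ->]; exists (fun i => c i + c' i); rewrite -big_split /=.
  by apply: eq_bigr => i _; rewrite mulrDl.
- move=> r a [c ->]; exists (fun i => r * c i); rewrite mulr_sumr.
  by apply: eq_bigr => i _; rewrite mulrA.
Qed.

Lemma span_cons_l a l : span (a :: l) a.
Proof.
exists (fun i => if i == 0%N then 1 else 0); rewrite big_ord_recl /= mul1r big1 ?addr0 //.
by move=> i _; rewrite mul0r.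
Qed.

Lemma span_cons_r a l b : span l b -> span (a :: l) b.
Proof.
move=> [c ->]; exists (fun i => if i is i'.+1 then c i' else 0).
by rewrite big_ord_recl /= mul0r add0r.
Qed.

Lemma span_sub I l : is_ideal I -> (forall i, (i < size l)%N -> I l`_i) -> subP (span l) I.
Proof.
move=> hI hl a [c ->]; apply: pisum => // i _; apply: piMl => //; exact: hl.
Qed.

Lemma fg I : noetherian B -> is_ideal I ->
  exists l : seq B, (forall i, (i < size l)%N -> I l`_i) /\ forall a, I a <-> span l a.
Proof.
move=> hN hI.
suff : forall K, forall l, (forall i, (i < size l)%N -> I l`_i) -> (forall a, K a <-> span l a) ->
  exists l : seq B, (forall i, (i < size l)%N -> I l`_i) /\ forall a, I a <-> span l a.
  by move=> /(_ (span [::]) [::]); apply.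
move=> K; elim/(well_founded_ind (wf_gtI hN)): K => K IH l hl hK.
have [hall|] := classic (forall a, I a -> span l a).
  exists l; split; first exact: hl.
  by move=> a; split; [exact: hall| exact: (span_sub hI hl)].
move=> /nall [a hna']; have [ha hna] := nimp hna'.
apply: (IH (span (a :: l)) _ (a :: l)) => //.
- split; [exact: span_ideal| exact: (ideal_ext (span_ideal l)) (fun b => iff_sym (hK b))|].
  split; first by move=> b /hK /span_cons_r.
  by exists a; split; [exact: span_cons_l| move/hK].
- by move=> [|i] /=; [move=> _ | rewrite ltnS; apply: hl].
Qed.

Lemma prime_avoid (S : B -> Prop) I : noetherian B -> S 1 -> (forall a b, S a -> S b -> S (a * b)) ->
  is_ideal I -> (forall a, I a -> ~ S a) ->
  exists Q, [/\ is_prime_ideal Q, subP I Q & forall a, Q a -> ~ S a].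
Proof.
move=> hN hS1 hSM; elim/(well_founded_ind (wf_gtI hN)): I => I IH hI hIS.
have [hp|np] := classic (is_prime_ideal I); first by exists I; split => // a.
have n1 : ~ I 1 by move=> /hIS.
have [u [v [huv [nu nv]]]] : exists u v, I (u * v) /\ ~ I u /\ ~ I v.
  apply: NNPP => h; apply: np; split => // a b hab; apply: NNPP => /not_or_and [na nb].
  by apply: h; exists a, b.
have gt w : ~ I w -> gtI (addgen I w) I.
  move=> nw; split => //; first exact: addgen_ideal.
  by split; [exact: addgen_sub| exists w; split => //; exact: addgen_gen].
have [hu|] := classic (forall a, addgen I u a -> ~ S a).
  have [Q [hQ hIQ hQS]] := IH _ (gt u nu) (addgen_ideal u hI) hu.
  by exists Q; split => // a ha; apply: hIQ; apply: addgen_sub.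
move=> /nall [z1 hz1]; have [[i1 [r1 [hi1 e1]]] /NNPP s1] := nimp hz1.
have [hv|] := classic (forall a, addgen I v a -> ~ S a).
  have [Q [hQ hIQ hQS]] := IH _ (gt v nv) (addgen_ideal v hI) hv.
  by exists Q; split => // a ha; apply: hIQ; apply: addgen_sub.
move=> /nall [z2 hz2]; have [[i2 [r2 [hi2 e2]]] /NNPP s2] := nimp hz2.
exfalso; apply: (hIS (z1 * z2)); last exact: hSM.
have -> : z1 * z2 = i1 * z2 + r1 * u * i2 + r1 * r2 * (u * v) by rewrite e1 e2; ring.
apply: piD => //; last exact: piMl.
by apply: piD => //; [exact: piMr| exact: piMl].
Qed.

Lemma fpc I : noetherian B -> is_ideal I ->
  exists L : seq (B -> Prop), (forall Q, List.In Q L -> is_prime_ideal Q /\ subP I Q) /\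
    (forall Q, is_prime_ideal Q -> subP I Q -> exists Q', List.In Q' L /\ subP Q' Q).
Proof.
move=> hN; elim/(well_founded_ind (wf_gtI hN)): I => I IH hI.
have [h1|n1] := classic (I 1).
  exists [::]; split => // Q [_ nQ _] hIQ; exfalso; exact/nQ/hIQ.
have [hp|np] := classic (is_prime_ideal I).
  exists [:: I]; split; first by move=> Q [<-|] //; split => // a.
  by move=> Q _ hIQ; exists I; split => //; left.
have [u [v [huv [nu nv]]]] : exists u v, I (u * v) /\ ~ I u /\ ~ I v.
  apply: NNPP => h; apply: np; split => // a b hab; apply: NNPP => /not_or_and [na nb].
  by apply: h; exists a, b.
have gt w : ~ I w -> gtI (addgen I w) I.
  move=> nw; split => //; first exact: addgen_ideal.
  by split; [exact: addgen_sub| exists w; split => //; exact: addgen_gen].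
have [Lu [hLu1 hLu2]] := IH _ (gt u nu) (addgen_ideal u hI).
have [Lv [hLv1 hLv2]] := IH _ (gt v nv) (addgen_ideal v hI).
exists (Lu ++ Lv); split.
  move=> Q hQin; case: (List.in_app_or _ _ _ hQin) => [/hLu1|/hLv1] [hQ hs];
  by split => // a ha; apply: hs; exact: addgen_sub.
move=> Q hQ hIQ; have [hQp _ hQm] := hQ.
have [qu|qv] := hQm _ _ (hIQ _ huv).
  have [Q' [h1 h2]] := hLu2 Q hQ (addgen_min hQp hIQ qu).
  by exists Q'; split => //; apply: List.in_or_app; left.
have [Q' [h1 h2]] := hLv2 Q hQ (addgen_min hQp hIQ qv).
by exists Q'; split => //; apply: List.in_or_app; right.
Qed.

Lemma list_min (L : seq (B -> Prop)) : L <> [::] ->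
  exists P, List.In P L /\ forall Q, List.In Q L -> subP Q P -> subP P Q.
Proof.
elim: L => // a L IH _; case: L IH => [|b L] IH.
  by exists a; split; [left| move=> Q [<-|]].
have [P [hP hmin]] := IH ltac:(done).
set L' := b :: L in hP hmin *.
have [haP|naP] := classic (subP a P).
  exists a; split; first by left.
  move=> Q [<-|hQ] // hQa z hz; apply: (hmin Q hQ) => //.
    by move=> w /hQa /haP.
  exact: haP.
exists P; split; first by right.
move=> Q [<-|hQ]; [by move=> /naP| exact: hmin].
Qed.

Lemma unit_not_prime I u : is_prime_ideal I -> u \is a GRing.unit -> ~ I u.
Proof.
move=> [hI n1 _] hu hIu; apply: n1; rewrite -(mulVr hu); exact: piMl.
Qed.

Lemma min_prime (x : B) : noetherian B -> ~~ (x \is a GRing.unit) ->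
  exists P, [/\ is_prime_ideal P, P x &
     forall Q, is_prime_ideal Q -> Q x -> subP Q P -> subP P Q].
Proof.
move=> hN nu.
have hx := principal_ideal x.
have [L [hL1 hL2]] := fpc hN hx.
have hS : forall a, principal x a -> ~ (fun z => z = 1) a.
  move=> a [r ->] e; move/negP: nu; apply; apply/unitrPr; exists r; by rewrite mulrC.
have [Q0 [hQ0 hxQ0 _]] := @prime_avoid (fun z => z = 1) (principal x) hN erefl
   (fun a b (ha : a = 1) (hb : b = 1) => etrans (congr2 *%R ha hb) (mulr1 1)) hx hS.
have [Q' [hQ'L _]] := hL2 Q0 hQ0 hxQ0.
have nL : L <> [::] by move=> eL; rewrite eL in hQ'L.
have [P [hPL hmin]] := list_min nL.
have [hP hxP] := hL1 P hPL.
exists P; split => //; first by apply: hxP; exists 1; rewrite mul1r.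
move=> Q hQ hQx hQP.
have hxQ : subP (principal x) Q by move=> a [r ->]; apply: piMl => //; case: hQ.
have [Q'' [hQ''L hQ''Q]] := hL2 Q hQ hxQ.
have := hmin Q'' hQ''L (fun a ha => hQP a (hQ''Q a ha)).
by move=> h a /h /hQ''Q.
Qed.
End Ideals.

Section Grading.
Variable B : idomainType.
Variable G : int -> B -> Prop.
Hypothesis HG : is_graded G.

Lemma G0 i : G i 0. Proof. by case: HG. Qed.
Lemma GB i a b : G i a -> G i b -> G i (a - b). Proof. by case: HG => _ h _ _ _; apply: h. Qed.
Lemma GN i a : G i a -> G i (- a). Proof. by move=> h; rewrite -sub0r; apply: GB (G0 i) h. Qed.
Lemma GD i a b : G i a -> G i b -> G i (a + b).
Proof. by move=> ha hb; rewrite -[b]opprK; apply: GB ha (GN hb). Qed.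
Lemma GM i j a b : G i a -> G j b -> G (i + j) (a * b). Proof. by case: HG => _ _ h _ _; apply: h. Qed.

Lemma decP a : exists sf : seq int * (int -> B),
  [/\ uniq sf.1, forall i, G i (sf.2 i) & a = \sum_(i <- sf.1) sf.2 i].
Proof. by case: HG => _ _ _ /(_ a) [s [f h]] _; exists (s, f). Qed.
Definition dec a := proj1_sig (constructive_indefinite_description _ (decP a)).
Lemma dec_spec a : [/\ uniq (dec a).1, forall i, G i ((dec a).2 i) & a = \sum_(i <- (dec a).1) (dec a).2 i].
Proof. exact: (proj2_sig (constructive_indefinite_description _ (decP a))). Qed.
Definition comp a i := if i \in (dec a).1 then (dec a).2 i else 0.

Lemma sum_sub (s u : seq int) (F : int -> B) : uniq s -> uniq u -> {subset s <= u} ->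
  \sum_(i <- u) (if i \in s then F i else 0) = \sum_(i <- s) F i.
Proof.
move=> us uu su; rewrite -big_mkcond /= -big_filter; apply: perm_big.
apply: uniq_perm => //; first exact: filter_uniq.
by move=> i; rewrite mem_filter; case: (boolP (i \in s)) => // /su ->.
Qed.

Lemma comp_eq a t h : uniq t -> (forall i, G i (h i)) -> a = \sum_(i <- t) h i ->
  forall i, comp a i = if i \in t then h i else 0.
Proof.
move=> ut hh ea i.
have [us hs ea'] := dec_spec a.
rewrite /comp.
move: us hs ea'; set s := (dec a).1; set f := (dec a).2 => us hs ea'.
pose u := undup (s ++ t).
pose g k := (if k \in s then f k else 0) - (if k \in t then h k else 0).
have hg : forall k, G k (g k).
  by move=> k; apply: GB; [case: ifP => _ //; exact: G0| case: ifP => _ //; exact: G0].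
have uu : uniq u by exact: undup_uniq.
have sum0 : \sum_(k <- u) g k = 0.
  rewrite sumrB (sum_sub f us uu) ?(sum_sub h ut uu) -?ea' -?ea ?subrr //.
    by move=> k hk; rewrite mem_undup mem_cat hk orbT.
  by move=> k hk; rewrite mem_undup mem_cat hk.
case: HG => _ _ _ _ /(_ u g uu hg sum0 i) hu.
case: (boolP (i \in u)) => [iu|].
  by move: (hu iu) => /eqP; rewrite subr_eq0 => /eqP.
by rewrite mem_undup mem_cat negb_or => /andP [ns nt]; rewrite (negbTE ns) (negbTE nt).
Qed.

Lemma comp_G a i : G i (comp a i).
Proof. rewrite /comp; case: ifP => _; [by case: (dec_spec a)| exact: G0]. Qed.

Lemma comp_out a i : i \notin (dec a).1 -> comp a i = 0.
Proof. by rewrite /comp => /negbTE ->. Qed.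

Lemma comp_sum a : a = \sum_(i <- (dec a).1) comp a i.
Proof.
have [_ _ ea] := dec_spec a; rewrite {1}ea; apply: eq_big_seq => i hi.
by rewrite /comp hi.
Qed.

Lemma comp_hom a j : G j a -> forall i, comp a i = if i == j then a else 0.
Proof.
move=> ha i; rewrite (@comp_eq a [:: j] (fun k => if k == j then a else 0)) //.
- by rewrite inE; case: eqP.
- by move=> k; case: eqP => [->|_]; [exact: ha| exact: G0].
- by rewrite big_seq1 eqxx.
Qed.

Lemma comp0 i : comp 0 i = 0.
Proof. by rewrite (comp_hom (G0 0)); case: ifP. Qed.

Lemma compD a b i : comp (a + b) i = comp a i + comp b i.
Proof.
pose t := undup ((dec a).1 ++ (dec b).1).
have ut : uniq t by exact: undup_uniq.
have [ua _ _] := dec_spec a; have [ub _ _] := dec_spec b.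
rewrite (@comp_eq (a + b) t (fun k => comp a k + comp b k)) //.
- case: ifP => // /negbT; rewrite mem_undup mem_cat negb_or => /andP [na nb].
  by rewrite !comp_out ?addr0.
- by move=> k; apply: GD; exact: comp_G.
- have sa : \sum_(k <- t) comp a k = a.
    rewrite /comp (sum_sub _ ua ut); last by move=> k hk; rewrite mem_undup mem_cat hk.
    by have [_ _ <-] := dec_spec a.
  have sb : \sum_(k <- t) comp b k = b.
    rewrite /comp (sum_sub _ ub ut); last by move=> k hk; rewrite mem_undup mem_cat hk orbT.
    by have [_ _ <-] := dec_spec b.
  by rewrite big_split /= sa sb.
Qed.

Lemma compN a i : comp (- a) i = - comp a i.
Proof. by apply/eqP; rewrite -addr_eq0 -compD addNr comp0. Qed.
Lemma compB a b i : comp (a - b) i = comp a i - comp b i.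
Proof. by rewrite compD compN. Qed.

Lemma comp_sumF (T : Type) (s : seq T) (F : T -> B) i :
  comp (\sum_(k <- s) F k) i = \sum_(k <- s) comp (F k) i.
Proof. by elim: s => [|y s IH]; rewrite ?big_nil ?comp0 // !big_cons compD IH. Qed.

Lemma comp_homM h j b : G j h -> forall i, comp (h * b) i = h * comp b (i - j).
Proof.
move=> hh i.
have [ub _ _] := dec_spec b.
rewrite (@comp_eq (h * b) (map (fun k => k + j) (dec b).1) (fun k => h * comp b (k - j))) //.
- case: ifP => // /negbT hn; rewrite comp_out ?mulr0 //; apply: contra hn => hin.
  by apply/mapP; exists (i - j) => //; rewrite subrK.
- by rewrite map_inj_uniq //; exact: addIr.
- move=> k; have := GM hh (comp_G b (k - j)); by rewrite addrC subrK.
- rewrite big_map -mulr_sumr {1}(comp_sum b); congr (_ * _).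
  by apply: eq_bigr => k _; rewrite addrK.
Qed.

Lemma compM a b i : comp (a * b) i = \sum_(j <- (dec a).1) comp a j * comp b (i - j).
Proof.
rewrite {1}(comp_sum a) mulr_suml comp_sumF; apply: eq_bigr => j _.
exact: (comp_homM _ (comp_G a j)).
Qed.

Lemma G01 : G 0 1.
Proof.
have [us hs e1] := dec_spec 1.
have [k [hk nk]] : exists k, k \in (dec 1).1 /\ (dec 1).2 k != 0.
  apply: NNPP => h; move/eqP: (oner_neq0 B); apply; rewrite e1 big1_seq //.
  move=> k /andP [_ hk]; apply/eqP; apply: NNPP => nk; apply: h; exists k; split => //; exact/negP.
set hk0 := (dec 1).2 k in nk.
have Gh : G k hk0 by exact: hs.
have e := comp_homM 1 Gh (0 + k); rewrite mulr1 add0r (comp_hom Gh) eqxx subrr in e.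
have -> : 1 = comp 1 0.
  by apply: (mulfI nk); rewrite mulr1.
exact: comp_G.
Qed.

Lemma comp1 i : comp 1 i = if i == 0 then 1 else 0.
Proof. exact: comp_hom G01 i. Qed.

Definition Pstar (P : B -> Prop) a := forall i, P (comp a i).

Lemma Pstar_sub P : is_ideal P -> subP (Pstar P) P.
Proof. by move=> hP a ha; rewrite (comp_sum a); apply: pisum. Qed.

Lemma seq_max (s : seq int) (Q : int -> Prop) : (exists i, i \in s /\ Q i) ->
  exists i0, [/\ i0 \in s, Q i0 & forall j, j \in s -> Q j -> j <= i0].
Proof.
elim: s => [|y s IH] [i [hi hQ]]; first by [].
have [hs|ns] := classic (exists i, i \in s /\ Q i).
  have [i0 [h1 h2 h3]] := IH hs.
  have [Qy|nQy] := classic (Q y).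
    have [le|lt] := leP y i0.
      exists i0; split => //; first by rewrite inE h1 orbT.
      by move=> j; rewrite inE => /orP [/eqP ->|/h3] //.
    exists y; split => //; first by rewrite inE eqxx.
    move=> j; rewrite inE => /orP [/eqP ->|hj hQj] //.
    by apply: le_trans (h3 j hj hQj) (ltW lt).
  exists i0; split => //; first by rewrite inE h1 orbT.
  by move=> j; rewrite inE => /orP [/eqP ->|/h3] //.
exists y; move: hi; rewrite inE => /orP [/eqP ei|hi]; last by case: ns; exists i.
subst i; split => //; first by rewrite inE eqxx.
move=> j; rewrite inE => /orP [/eqP ->|hj hQj] //; by case: ns; exists j.
Qed.

Lemma Pstar_prime P : is_prime_ideal P -> is_prime_ideal (Pstar P).
Proof.
move=> hPp; have [hP n1 hpr] := hPp.
have hPs : is_ideal (Pstar P).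
  split.
  - by move=> i; rewrite comp0; exact: pi0.
  - by move=> a b ha hb i; rewrite compD; apply: piD.
  - by move=> r a ha i; rewrite compM; apply: pisum => // j _; apply: piMl.
split => //; first by move=> /(Pstar_sub hP).
move=> a b hab; apply: NNPP => /not_or_and [na nb].
have maxP : forall c, ~ Pstar P c -> exists i0, ~ P (comp c i0) /\ forall j, i0 < j -> P (comp c j).
  move=> c /nall [i ni].
  have hi : i \in (dec c).1 by apply: NNPP => /negP /comp_out e; apply: ni; rewrite e; exact: pi0.
  have [i0 [h1 h2 h3]] := @seq_max (dec c).1 (fun j => ~ P (comp c j)) (ex_intro _ i (conj hi ni)).
  exists i0; split => // j lt; apply: NNPP => nj.
  have [jin|jout] := boolP (j \in (dec c).1).
    by move: (h3 j jin nj); rewrite leNgt lt.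
  by apply: nj; rewrite comp_out //; exact: pi0.
have [i0 [ni0 hi0]] := maxP a na; have [j0 [nj0 hj0]] := maxP b nb.
have := hab (i0 + j0); rewrite compM.
have i0in : i0 \in (dec a).1 by apply: NNPP => /negP /comp_out e; apply: ni0; rewrite e; exact: pi0.
have [ua _ _] := dec_spec a.
rewrite (bigD1_seq i0 i0in ua) /=.
have rest : P (\sum_(j <- (dec a).1 | j != i0) comp a j * comp b (i0 + j0 - j)).
  apply: pisum => // j nj.
  have [lt|le] := ltP i0 j; first exact: piMr _ hP (hi0 j lt).
  apply: (piMl _ hP); apply: hj0.
  have : j < i0 by rewrite lt_neqAle nj le.
  lia.
move=> hs; have := piB hP hs rest; rewrite addrK.
have -> : i0 + j0 - i0 = j0 by ring.
by move=> /hpr [].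
Qed.

Lemma min_prime_hom P x j : is_prime_ideal P -> P x -> G j x ->
  (forall Q, is_prime_ideal Q -> Q x -> subP Q P -> subP P Q) -> is_homogeneous G P.
Proof.
move=> hPp hx hGx hmin.
have hP : is_ideal P by case: hPp.
have sub : subP P (Pstar P).
  apply: hmin; first exact: Pstar_prime.
  - by move=> i; rewrite (comp_hom hGx); case: ifP => // _; exact: pi0.
  - exact: Pstar_sub.
move=> a s f us hf ea Pa i his.
by have := sub a Pa i; rewrite (comp_eq us hf ea i) his.
Qed.

Lemma gen_deg (n : nat) (x : 'I_n -> B) (d : 'I_n -> int) (I : B -> Prop) (D : int -> Prop) :
  generated_by G x -> (forall i, G (d i) (x i)) -> is_ideal I -> D 0 ->
  (forall j k, D j -> D k -> D (j + k)) -> (forall i, D (d i) \/ I (x i)) ->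
  forall k b, G k b -> ~ D k -> I b.
Proof.
move=> hgen hx hI D0 DD hdx.
pose S a := forall k, ~ D k -> I (comp a k).
have hS : forall a, S a.
  apply: hgen.
  - move=> k nk; rewrite comp1; case: eqP => [ek|_]; last exact: pi0.
    by case: nk; rewrite ek.
  - by move=> a b ha hb k nk; rewrite compB; apply: piB => //; [apply: ha| apply: hb].
  - move=> a b ha hb k nk; rewrite compM; apply: pisum => // j _.
    have [Dj|nDj] := classic (D j); last by apply: piMr => //; exact: ha.
    apply: piMl => //; apply: hb => Dkj; apply: nk.
    by have := DD _ _ Dj Dkj; rewrite addrC subrK.
  - move=> a ha k nk; rewrite (comp_hom ha); case: eqP => [ek|_]; last exact: pi0.
    by case: nk; rewrite ek.
  - move=> i k nk; rewrite (comp_hom (hx i)); case: eqP => [ek|_]; last exact: pi0.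
    by case: (hdx i) => // hD; case: nk; rewrite ek.
move=> k b hb nk; have := hS b k nk; by rewrite (comp_hom hb) eqxx.
Qed.

End Grading.

Section Nak.
Variable B : idomainType.

Lemma prod_diff (T : B -> Prop) (I : Type) (r : seq I) (F1 F2 : I -> B) : is_ideal T ->
  (forall i, T (F1 i - F2 i)) -> T (\prod_(i <- r) F1 i - \prod_(i <- r) F2 i).
Proof.
move=> hT hF; apply: (big_ind2 (fun u v => T (u - v))) => //.
  by rewrite subrr; exact: pi0.
move=> x1 x2 y1 y2 h1 h2.
have -> : x1 * y1 - x2 * y2 = x1 * (y1 - y2) + (x1 - x2) * y2 by ring.
by apply: piD => //; [exact: piMl| exact: piMr].
Qed.

Lemma nakayama (T N : B -> Prop) (l : seq B) : is_prime_ideal T -> is_ideal N ->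
  (forall i : 'I_(size l), exists (s : B) (a : 'I_(size l) -> B),
     [/\ ~ T s, forall j, T (a j) & N (s * l`_i - \sum_j a j * l`_j)]) ->
  exists d, ~ T d /\ forall i : 'I_(size l), N (d * l`_i).
Proof.
move=> hTp hN H.
have hT : is_ideal T by case: hTp.
have H' : forall i : 'I_(size l), exists sa : B * ('I_(size l) -> B),
    [/\ ~ T sa.1, forall j, T (sa.2 j) & N (sa.1 * l`_i - \sum_j sa.2 j * l`_j)].
  by move=> i; have [s [a h]] := H i; exists (s, a).
have [sa hsa] := fin_all_exists H'.
pose D : 'M[B]_(size l) := diag_mx (\row_i (sa i).1).
pose M : 'M[B]_(size l) := \matrix_(i, j) (sa i).2 j.
pose A := D - M.
exists (\det A); split.
  have hd : T (\det A - \det D).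
    rewrite /determinant -sumrB; apply: pisum => // s _; rewrite -mulrBr; apply: piMl => //.
    apply: prod_diff => // i.
    have -> : A i (s i) - D i (s i) = - M i (s i) by rewrite /A !mxE; ring.
    rewrite mxE; apply: piN => //; by case: (hsa i).
  move=> hA; have := piB hT hA hd; rewrite opprB addrC subrK.
  rewrite det_diag; apply: prime_prod_notin => // i; rewrite mxE; by case: (hsa i).
move=> i.
pose v : 'cV[B]_(size l) := \col_j l`_j.
have Av : forall k, N ((A *m v) k 0).
  move=> k; rewrite /A mulmxBl mul_diag_mx !mxE.
  have [_ _ hk] := hsa k.
  suff -> : \sum_j M k j * v j 0 = \sum_j (sa k).2 j * l`_j by [].
  by apply: eq_bigr => j _; rewrite !mxE.
have e : \adj A *m (A *m v) = \det A *: v by rewrite mulmxA mul_adj_mx mul_scalar_mx.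
have := congr1 (fun X : 'cV[B]_(size l) => X i 0) e; rewrite !mxE => <-.
apply: pisum => // k _; exact: piMl.
Qed.

End Nak.

Section PIT.
Variable B : idomainType.
Hypothesis hN : noetherian B.
Variables (P : B -> Prop) (x : B).
Hypotheses (hPp : is_prime_ideal P) (hxP : P x)
  (hmin : forall Q, is_prime_ideal Q -> Q x -> subP Q P -> subP P Q).

Let hP : is_ideal P. Proof. by case: hPp. Qed.
Let nP1 : ~ P 1. Proof. by case: hPp. Qed.
Let hPm : forall a b, P (a * b) -> P a \/ P b. Proof. by case: hPp. Qed.

Lemma radP p : P p -> exists s m r, ~ P s /\ s * p ^+ m = r * x.
Proof.
move=> hp; apply: NNPP => hn.
pose S z := exists s m, ~ P s /\ z = s * p ^+ m.
have S1 : S 1 by exists 1, 0%N; rewrite expr0 mulr1.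
have SM : forall a b, S a -> S b -> S (a * b).
  move=> a b [s [m [ns ->]]] [t [k [nt ->]]]; exists (s * t), (m + k)%N; split.
    by move=> /hPm [].
  by rewrite exprD; ring.
have disj : forall a, principal x a -> ~ S a.
  by move=> a [r ->] [s [m [ns e]]]; apply: hn; exists s, m, r; split.
have [Q [hQ hxQ hQS]] := prime_avoid hN S1 SM (principal_ideal x) disj.
have QP : subP Q P.
  move=> a ha; apply: NNPP => na; apply: (hQS a ha); exists a, 0%N; by rewrite expr0 mulr1.
have hQx : Q x by apply: hxQ; exists 1; rewrite mul1r.
have := hmin hQ hQx QP hp => hQp.
by apply: (hQS p hQp); exists 1, 1%N; rewrite expr1 mul1r.
Qed.

Definition sat (I : B -> Prop) : B -> Prop := fun a => exists s, ~ P s /\ I (s * a).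
Definition saturated (I : B -> Prop) := forall s a, ~ P s -> I (s * a) -> I a.

Lemma sat_ideal I : is_ideal I -> is_ideal (sat I).
Proof.
move=> hI; split.
- by exists 1; rewrite mulr0; split => //; exact: pi0.
- move=> a b [s [ns ha]] [t [nt hb]]; exists (s * t); split; first by move=> /hPm [].
  have -> : s * t * (a + b) = t * (s * a) + s * (t * b) by ring.
  by apply: piD => //; exact: piMl.
- move=> r a [s [ns ha]]; exists s; split => //.
  by rewrite mulrCA; exact: piMl.
Qed.
Lemma sat_sat I : saturated (sat I).
Proof.
move=> t a nt [s [ns h]]; exists (s * t); split; first by move=> /hPm [].
by rewrite -mulrA.
Qed.
Lemma sat_sub I : subP I (sat I).
Proof. by move=> a ha; exists 1; rewrite mul1r. Qed.
Lemma sat_min I J : saturated J -> subP I J -> subP (sat I) J.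
Proof. by move=> sJ hIJ a [s [ns h]]; apply: (sJ s) => //; exact: hIJ. Qed.

Lemma gen I : is_ideal I -> saturated I -> I x -> ~ I 1 ->
  exists g, ~ I g /\ forall p, P p -> I (p * g).
Proof.
move=> hI sI xI nI1.
have [l [hl hPl]] := fg hN hP.
have pw : forall p, P p -> exists m, I (p ^+ m).
  move=> p /radP [s [m [r [ns e]]]]; exists m; apply: (sI s) => //.
  by rewrite e; exact: piMl.
have step : forall ls : seq B, (forall p, p \in ls -> P p) ->
    forall g, ~ I g -> exists g', ~ I g' /\ forall p, p \in ls -> I (p * g').
  elim => [|p ls IH] hls g ng; first by exists g.
  have hls' : forall q, q \in ls -> P q by move=> q hq; apply: hls; rewrite inE hq orbT.
  have [g1 [ng1 h1]] := IH hls' g ng.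
  have [m hm] := pw p (hls p (mem_head p ls)).
  have [a [na ha]] : exists a, ~ I (p ^+ a * g1) /\ I (p ^+ a.+1 * g1).
    have : I (p ^+ m * g1) by exact: piMr.
    elim: m {hm} => [|m IHm]; first by rewrite expr0 mul1r.
    have [hm'|nm'] := classic (I (p ^+ m * g1)); first by move=> _; exact: IHm.
    by move=> h; exists m.
  exists (p ^+ a * g1); split => // q; rewrite inE => /orP [/eqP ->|hq].
    by rewrite mulrA -exprS.
  by rewrite mulrCA; apply: piMl => //; exact: h1.
have hlP : forall p, p \in l -> P p.
  by move=> p /(nthP 0) [i hi <-]; exact: hl.
have [g [ng hg]] := step l hlP 1 nI1.
exists g; split => // p /hPl [c ->]; rewrite mulr_suml; apply: pisum => // i _.
by rewrite -mulrA; apply: piMl => //; apply: hg; exact: mem_nth.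
Qed.

Definition Dcc I := forall J : nat -> B -> Prop, (forall k, is_ideal (J k) /\ saturated (J k)) ->
  (forall k, subP (J k.+1) (J k)) -> (forall k, subP I (J k)) ->
  exists N, forall k, (N <= k)%N -> subP (J N) (J k).

Lemma desc_le (J : nat -> B -> Prop) : (forall k, subP (J k.+1) (J k)) ->
  forall m k, (m <= k)%N -> subP (J k) (J m).
Proof.
move=> hJ m k /subnKC <-; elim: (k - m)%N => [|t IH] a; first by rewrite addn0.
by rewrite addnS => /hJ /IH.
Qed.

Lemma dcc_all I : is_ideal I -> saturated I -> I x -> Dcc I.
Proof.
elim/(well_founded_ind (wf_gtI hN)): I => I IH hI sI xI J hJ hdesc hIJ.
have [I1|nI1] := classic (I 1).
  exists 0%N => k _ a _; apply: (pi1 _ (proj1 (hJ k))); exact: hIJ.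
have [g [ng hg]] := gen hI sI xI nI1.
pose I' := sat (addgen I g).
have hI' : is_ideal I' := sat_ideal (addgen_ideal g hI).
have sI' : saturated I' := @sat_sat _.
have II' : subP I I' by move=> a ha; apply: sat_sub; exact: addgen_sub.
have gI' : I' g by apply: sat_sub; exact: addgen_gen.
have gtI'I : gtI I' I by split => //; split => //; exists g.
have IH' := IH I' gtI'I hI' sI' (II' x xI).
have two : forall K, is_ideal K -> saturated K -> subP I K -> subP K I' -> subP K I \/ subP I' K.
  move=> K hK sK hIK hKI'; have [h|h] := classic (subP K I); [by left| right].
  have [a ha'] := nall h; have [ha na] := nimp ha'.
  have [s [ns [i [r [hi e]]]]] := hKI' a ha.
  have [Pr|nPr] := classic (P r).
    by case: na; apply: (sI s) => //; rewrite e; apply: piD => //; exact: hg.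
  have Kg : K g.
    apply: (sK r) => //.
    have -> : r * g = s * a - i by rewrite e; ring.
    by apply: piB => //; [exact: piMl| exact: hIK].
  exact: sat_min sK (addgen_min hK hIK Kg).
pose K k := fun a => J k a /\ I' a.
have hK : forall k, is_ideal (K k) /\ saturated (K k).
  move=> k; have [hJk sJk] := hJ k; split.
    split; first by split; exact: pi0.
    - by move=> a b [h1 h2] [h3 h4]; split; apply: piD.
    - by move=> r a [h1 h2]; split; apply: piMl.
  by move=> t a nt [h1 h2]; split; [exact: (sJk t)| exact: (sI' t)].
have Kdesc : forall k, subP (K k.+1) (K k) by move=> k a [h1 h2]; split => //; exact: hdesc.
have [N1 hN1] : exists N1, forall k, (N1 <= k)%N -> subP (K N1) (K k).
  have [[k0 hk0]|nk] := classic (exists k0, subP (K k0) I).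
    by exists k0 => k _ a /hk0 Ia; split; [exact: hIJ| exact: II'].
  exists 0%N => k _ a [_ ha].
  have [h|h] := two (K k) (proj1 (hK k)) (proj2 (hK k)) (fun b hb => conj (hIJ k b hb) (II' b hb)) (fun b hb => proj2 hb).
    by case: nk; exists k.
  exact: h.
pose L k := sat (sumI (J k) I').
have hL : forall k, is_ideal (L k) /\ saturated (L k).
  by move=> k; split; [apply: sat_ideal; apply: sumI_ideal => //; exact: (proj1 (hJ k))| exact: sat_sat].
have Ldesc : forall k, subP (L k.+1) (L k).
  move=> k a [s [ns [u [v [hu [hv e]]]]]]; exists s; split => //.
  by exists u, v; split => //; exact: hdesc.
have I'L : forall k, subP I' (L k).
  move=> k a ha; apply: sat_sub; exists 0, a; split; first exact: pi0 (proj1 (hJ k)).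
  by rewrite add0r.
have [N2 hN2] := IH' L hL Ldesc I'L.
exists (maxn N1 N2) => k hk a ha.
have hN1k : (N1 <= k)%N by apply: leq_trans hk; exact: leq_maxl.
have hN2k : (N2 <= k)%N by apply: leq_trans hk; exact: leq_maxr.
have La : L (maxn N1 N2) a.
  apply: sat_sub; exists a, 0; split => //; split; [exact: pi0| by rewrite addr0].
have := desc_le Ldesc (leq_maxr N1 N2) La => /(hN2 k hN2k) [s [ns [u [v [hu [hv e]]]]]].
have Jv : J (maxn N1 N2) v.
  have -> : v = s * a - u by rewrite e; ring.
  apply: piB; first exact: (proj1 (hJ _)).
    by apply: piMl => //; exact: (proj1 (hJ _)).
  by apply: (desc_le hdesc hk).
have KN1v : K N1 v by apply: (desc_le Kdesc (leq_maxl N1 N2)); split.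
have [Jkv _] := hN1 k hN1k v KN1v.
apply: ((proj2 (hJ k)) s) => //; rewrite e; apply: piD => //; exact: (proj1 (hJ k)).
Qed.


Definition prodI (I J : B -> Prop) : B -> Prop := fun a => exists (k : nat) (u v : nat -> B),
  [/\ forall i, I (u i), forall i, J (v i) & a = \sum_(i < k) u i * v i].

Lemma prodI_ideal I J : is_ideal I -> is_ideal J -> is_ideal (prodI I J).
Proof.
move=> hI hJ; split.
- exists 0%N, (fun _ => 0), (fun _ => 0); split; try by move=> _; exact: pi0.
  by rewrite big_ord0.
- move=> a b [k1 [u1 [v1 [hu1 hv1 ->]]]] [k2 [u2 [v2 [hu2 hv2 ->]]]].
  exists (k1 + k2)%N, (fun i => if (i < k1)%N then u1 i else u2 (i - k1)%N),
    (fun i => if (i < k1)%N then v1 i else v2 (i - k1)%N); split.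
  + by move=> i; case: ifP.
  + by move=> i; case: ifP.
  + rewrite big_split_ord /=; congr (_ + _); apply: eq_bigr => i _ /=.
      by rewrite ltn_ord.
    by rewrite ltnNge leq_addr /= addKn.
- move=> r a [k [u [v [hu hv ->]]]]; exists k, (fun i => r * u i), v; split => //.
    by move=> i; exact: piMl.
  by rewrite mulr_sumr; apply: eq_bigr => i _; rewrite mulrA.
Qed.

Lemma prodI_sub_r I J : is_ideal J -> subP (prodI I J) J.
Proof. by move=> hJ a [k [u [v [hu hv ->]]]]; apply: pisum => // i _; exact: piMl. Qed.

Section Sym.
Variable Q : B -> Prop.
Hypothesis hQp : is_prime_ideal Q.
Let hQ : is_ideal Q. Proof. by case: hQp. Qed.
Let hQm : forall a b, Q (a * b) -> Q a \/ Q b. Proof. by case: hQp. Qed.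

Fixpoint Qpow n : B -> Prop := if n is m.+1 then prodI Q (Qpow m) else (fun _ => True).

Lemma Qpow_ideal n : is_ideal (Qpow n).
Proof. by elim: n => [|n IH] /=; [split| exact: prodI_ideal]. Qed.

Lemma Qpow_mem q n : Q q -> Qpow n (q ^+ n).
Proof.
move=> hq; elim: n => [|n IH] //=.
exists 1%N, (fun _ => q), (fun _ => q ^+ n); split => //.
by rewrite big_ord1 exprS.
Qed.

Definition Qs n : B -> Prop := fun a => exists s, ~ Q s /\ Qpow n (s * a).

Lemma Qs_ideal n : is_ideal (Qs n).
Proof.
have hp := Qpow_ideal n; split.
- by exists 1; rewrite mulr0; split; [case: hQp| exact: pi0].
- move=> a b [s [ns ha]] [t [nt hb]]; exists (s * t); split; first by move=> /hQm [].
  have -> : s * t * (a + b) = t * (s * a) + s * (t * b) by ring.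
  by apply: piD => //; exact: piMl.
- move=> r a [s [ns ha]]; exists s; split => //.
  by rewrite mulrCA; exact: piMl.
Qed.

Lemma Qs_sat n t a : ~ Q t -> Qs n (t * a) -> Qs n a.
Proof.
move=> nt [s [ns h]]; exists (s * t); split; first by move=> /hQm [].
by rewrite -mulrA.
Qed.

Lemma Qs_pow n a : Qpow n a -> Qs n a.
Proof. by move=> h; exists 1; rewrite mul1r; split => //; case: hQp. Qed.

Lemma Qs_desc n : subP (Qs n.+1) (Qs n).
Proof.
move=> a [s [ns h]]; exists s; split => //.
exact: (prodI_sub_r (Qpow_ideal n) h).
Qed.
End Sym.

Lemma pit_core Q : is_prime_ideal Q -> subP Q P -> (exists a, P a /\ ~ Q a) ->
  forall q, Q q -> q = 0.
Proof.
move=> hQp QP [a0 [Pa0 nQa0]].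
have hQ : is_ideal Q by case: hQp.
have nQx : ~ Q x.
  by move=> Qx; apply: nQa0; apply: (hmin hQp Qx QP).
pose Jc k := sat (addgen (Qs Q k) x).
have hJc : forall k, is_ideal (Jc k) /\ saturated (Jc k).
  by move=> k; split; [apply: sat_ideal; apply: addgen_ideal; exact: Qs_ideal| exact: sat_sat].
have Jdesc : forall k, subP (Jc k.+1) (Jc k).
  move=> k a [s [ns [i [r [hi e]]]]]; exists s; split => //; exists i, r; split => //.
  exact: Qs_desc.
pose I0 := sat (principal x).
have I0J : forall k, subP I0 (Jc k).
  move=> k a [s [ns [r e]]]; exists s; split => //; exists 0, r; split.
    by apply: pi0; exact: Qs_ideal.
  by rewrite add0r.
have hI0 : is_ideal I0 by apply: sat_ideal; exact: principal_ideal.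
have xI0 : I0 x by apply: sat_sub; exists 1; rewrite mul1r.
have [N hNk] := dcc_all hI0 (@sat_sat _) xI0 hJc Jdesc I0J.
have [l [hl hQsl]] := fg hN (Qs_ideal hQp N).
have step1 : subP (Qs Q N) (Qs Q N.+1).
  have [d [nd hd]] : exists d, ~ P d /\ forall i : 'I_(size l), Qs Q N.+1 (d * l`_i).
    apply: nakayama => //; first exact: Qs_ideal.
    move=> i.
    have li : Jc N l`_i by apply: sat_sub; apply: addgen_sub; [exact: Qs_ideal| exact: hl].
    have [s [ns [q [r [hq e]]]]] := hNk N.+1 (leqnSn N) _ li.
    have hr : Qs Q N r.
      apply: (Qs_sat hQp nQx); rewrite mulrC.
      have -> : r * x = s * l`_i - q by rewrite e; ring.
      apply: piB; first exact: Qs_ideal.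
        by apply: piMl; [exact: Qs_ideal| exact: hl].
      exact: Qs_desc.
    have [c ec] := (proj1 (hQsl r)) hr.
    exists s, (fun j : 'I_(size l) => c j * x); split => //.
      by move=> j; exact: piMl.
    have -> : \sum_(j < size l) c j * x * l`_j = r * x.
      by rewrite ec mulr_suml; apply: eq_bigr => j _; ring.
    by rewrite e addrK.
  move=> m /hQsl [c ->]; apply: (Qs_sat hQp (fun h => nd (QP d h))).
  rewrite mulr_sumr; apply: pisum; first exact: Qs_ideal.
  by move=> i _; rewrite mulrCA; apply: piMl; [exact: Qs_ideal| exact: hd].
have l0 : forall i : 'I_(size l), l`_i = 0.
  have [d [nd hd]] : exists d, ~ Q d /\ forall i : 'I_(size l), zeroI (d * l`_i).
    apply: nakayama => //; first exact: zeroI_ideal.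
    move=> i.
    have [s [ns [k [u [v [hu hv e]]]]]] := step1 _ (hl i (ltn_ord i)).
    have hvs : forall t, exists c : nat -> B, v t = \sum_(j < size l) c j * l`_j.
      by move=> t; apply/hQsl; apply: (Qs_pow hQp); exact: hv.
    pose cf t := proj1_sig (constructive_indefinite_description _ (hvs t)).
    have ecf : forall t, v t = \sum_(j < size l) cf t j * l`_j.
      by move=> t; exact: (proj2_sig (constructive_indefinite_description _ (hvs t))).
    exists s, (fun j : 'I_(size l) => \sum_(t < k) u t * cf t j); split => //.
      by move=> j; apply: pisum => // t _; exact: piMr.
    rewrite /zeroI e; apply/eqP; rewrite subr_eq0; apply/eqP.
    under eq_bigr do rewrite ecf mulr_sumr.
    rewrite exchange_big /=; apply: eq_bigr => j _; rewrite mulr_suml.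
    by apply: eq_bigr => t _; rewrite mulrA.
  move=> i; have /eqP := hd i; rewrite mulf_eq0 => /orP [/eqP d0|/eqP //].
  by case: nd; rewrite d0; exact: pi0.
move=> q hq.
have : Qs Q N (q ^+ N) by apply: (Qs_pow hQp); exact: Qpow_mem.
move=> /hQsl [c e]; move: e; rewrite big1 => [e|i _]; last by rewrite l0 mulr0.
by move/eqP: e; rewrite expf_eq0 => /andP [_ /eqP].
Qed.

Lemma height_one_P : x != 0 -> height_one P.
Proof.
move=> nx0; split => //.
  exists (fun k => if k == 0%N then @zeroI B else P); split.
  - by move=> [|[|k]] //= _; exact: zeroI_prime.
  - move=> [|k] //= _; split; first by move=> a ->; exact: pi0.
    by exists x; split => // /eqP; rewrite (negbTE nx0).
  - by [].
move=> [C [hC hs he]].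
have [_ [a [C1a nC0a]]] := hs 0%N isT.
have [C12 [b [C2b nC1b]]] := hs 1%N isT.
have hC0 : is_ideal (C 0%N) by case: (hC 0%N isT).
apply: nC0a; have -> : a = 0.
  apply: (pit_core (hC 1%N isT)) => //.
    by move=> z /C12 /he.
  by exists b; split => //; apply/he.
exact: pi0.
Qed.

End PIT.

Lemma gcd_exists (S : int -> Prop) : exists d, is_gcd_of S d.
Proof.
have [[i0 [hS0 ni0]]|none] := classic (exists i, S i /\ i != 0).
  pose CD m := forall i, S i -> (m %| absz i)%N.
  pose cdb m := if excluded_middle_informative (CD m) then true else false.
  have cdbP m : cdb m = true <-> CD m.
    by rewrite /cdb; case: excluded_middle_informative => h; split.
  have ex : exists m, cdb m by exists 1%N; apply/cdbP => i _; exact: dvd1n.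
  have bnd : forall m, cdb m -> (m <= absz i0)%N.
    by move=> m /cdbP h; apply: dvdn_leq; [by rewrite absz_gt0| exact: h].
  case: (ex_maxnP ex bnd) => m hm hmm.
  have hm' := (cdbP m).1 hm.
  exists m; split => // m' hm''.
  have hl : CD (lcmn m' m) by move=> i hi; rewrite dvdn_lcm hm'' // hm'.
  have le1 := hmm _ ((cdbP _).2 hl).
  have pos : (0 < absz i0)%N by rewrite absz_gt0.
  have m'0 : (0 < m')%N := dvdn_gt0 pos (hm'' _ hS0).
  have m0 : (0 < m)%N := dvdn_gt0 pos (hm' _ hS0).
  have le2 : (m <= lcmn m' m)%N by apply: dvdn_leq; [by rewrite lcmn_gt0 m'0 m0| exact: dvdn_lcmr].
  have <- : lcmn m' m = m by apply: anti_leq; rewrite le1 le2.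
  exact: dvdn_lcml.
exists 0%N; split => // i hi.
have -> : i = 0 by apply: NNPP => ni; apply: none; exists i; split => //; exact/eqP.
by [].
Qed.

Lemma dvd_abs_add (m : nat) (j k : int) : (m %| absz j)%N -> (m %| absz k)%N ->
  (m %| absz (GRing.add j k))%N.
Proof. by move=> h1 h2; have : (m%:Z %| j + k)%Z by apply: rpredD. Qed.

Lemma ecoef_dvd n (d : 'I_n -> int) i j : j != i -> (ecoef d i %| absz (d j))%N.
Proof. by move=> hj; rewrite /ecoef; apply: (biggcdn_inf j) => //. Qed.

Lemma ecoef_gt0 n (d : 'I_n -> int) i : (2 <= n)%N -> (forall j, d j != 0) -> (0 < ecoef d i)%N.
Proof.
move=> hn hd0.
have [j hj] : exists j : 'I_n, j != i.
  have h0 : (0 < n)%N by apply: leq_trans hn.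
  pose j0 := Ordinal h0; pose j1 := Ordinal hn.
  case: (eqVneq i j0) => [->|ne]; last by exists j0; rewrite eq_sym.
  by exists j1.
apply: dvdn_gt0 (ecoef_dvd d hj); by rewrite absz_gt0.
Qed.

Lemma partA (B : idomainType) (G : int -> B -> Prop) (n : nat) (x : 'I_n -> B) (d : 'I_n -> int) :
  is_graded G -> noetherian B -> generated_by G x -> (forall i, x i != 0) ->
  (forall i, G (d i) (x i)) -> forall i, ~~ (x i \is a GRing.unit) ->
  forall p, prime p -> (p %| ecoef d i)%N -> PiB G p.
Proof.
move=> hG hN hgen hx0 hGx i nu p hp hpe.
have [P [hPp hxP hmin]] := min_prime hN nu.
have hP : is_ideal P by case: hPp.
have hh := height_one_P hN hPp hxP hmin (hx0 i).
have hom := min_prime_hom hG hPp hxP (hGx i) hmin.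
have [e he] := gcd_exists (fun k => exists b, G k b /\ ~ P b).
split => //; exists P; split => //; exists e; split => //.
apply: dvdn_trans hpe _; apply: (proj2 he) => k [b [hb nb]].
apply: NNPP => nD.
apply: nb; apply: (gen_deg hG (D := fun k => (ecoef d i %| absz k)%N) hgen hGx hP) hb nD.
- exact: dvdn0.
- by move=> j k'; exact: dvd_abs_add.
- move=> j; case: (eqVneq j i) => [->|ne]; first by right.
  by left; exact: ecoef_dvd.
Qed.

Unset Implicit Arguments.
Theorem lemma3p13 (B : idomainType) (G : int -> B -> Prop) (n : nat)
    (x : 'I_n -> B) (d : 'I_n -> int) :
  is_graded G -> noetherian B -> e_ring G 1 ->
  generated_by G x -> (2 <= n)%N ->
  (forall i, x i != 0) -> (forall i, d i != 0) -> (forall i, G (d i) (x i)) ->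
  let U := [set i | x i \is a GRing.unit] in
  let E := fun p : nat => p \in primes (\prod_(i in ~: U) ecoef d i) in
  [/\ (* (a) *) forall p, E p -> PiB G p,
      (* (b) *) U != set0 -> forall p, PiB G p ->
                  p \in primes (\big[gcdn/0%N]_(i in U) absz (d i)),
      (* (c) *) (forall P : B -> Prop, height_one P ->
                   ~ (forall k : int, k != 0 -> forall b, G k b -> P b)) ->
                forall p, PiB G p -> p \in primes (\prod_i absz (d i))
    & (* (d) *) (forall i j : 'I_n, i != j -> forall P : B -> Prop, height_one P ->
                   ~ (P (x i) /\ P (x j))) ->
                forall p, PiB G p <-> E p].
Proof.
move=> hG hN he hgen hn hx0 hd0 hGx U E.
have hA : forall p, E p -> PiB G p.
  move=> p; rewrite /E mem_primes => /and3P [hp _ hdiv].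
  move: hdiv; rewrite Euclid_dvd_prod // big_has_cond => /hasP [i _ /andP [hiU hpi]].
  apply: (partA hG hN hgen hx0 hGx (i := i)) => //.
  by move: hiU; rewrite !inE.
have notP : forall P : B -> Prop, is_prime_ideal P -> forall e, e_quot G P e ->
    forall j, ~ P (x j) -> (e %| absz (d j))%N.
  by move=> P _ e he' j nj; apply: (proj1 he'); exists (x j); split.
have prodpos : (0 < \prod_(i in ~: U) ecoef d i)%N by apply: prodn_gt0 => i; exact: ecoef_gt0.
split => //.
- move=> /set0Pn [i0 hi0] p [hp [P [[hPp _ _] hom [e [he' pe]]]]].
  have hdiv : forall i, i \in U -> (p %| absz (d i))%N.
    move=> i hi; apply: dvdn_trans pe _; apply: (notP P hPp e he').
    by apply: unit_not_prime => //; move: hi; rewrite inE.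
  rewrite mem_primes hp /=.
  have hg : (p %| \big[gcdn/0%N]_(i in U) absz (d i))%N by apply/dvdn_biggcdP.
  rewrite hg andbT; apply: (@dvdn_gt0 _ (absz (d i0))); first by rewrite absz_gt0.
  exact: (biggcdn_inf i0).
- move=> hc p [hp [P [hh hom [e [he' pe]]]]].
  have [hPp _ _] := hh.
  have hP : is_ideal P by case: hPp.
  have [j nj] : exists j, ~ P (x j).
    apply: NNPP => hn'; apply: (hc P hh) => k nk b hb.
    apply: (gen_deg hG (D := fun k => k = 0) hgen hGx hP) hb _.
    + by [].
    + by move=> j' k' -> ->; rewrite addr0.
    + by move=> j; right; apply: NNPP => nj; apply: hn'; exists j.
    + by move/eqP: nk.
  rewrite mem_primes hp /= prodn_gt0 /=; last by move=> i; rewrite absz_gt0.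
  apply: dvdn_trans pe _; apply: dvdn_trans (notP P hPp e he' j nj) _.
  by rewrite (bigD1 j) //= dvdn_mulr.
- move=> hpair p; split; last exact: hA.
  move=> [hp [P [hh hom [e [he' pe]]]]].
  have [hPp _ _] := hh.
  have hP : is_ideal P by case: hPp.
  have [[i hi]|none] := classic (exists i, P (x i)).
    have he_i : (e %| ecoef d i)%N.
      apply/dvdn_biggcdP => j hj; apply: (notP P hPp e he') => hPj.
      by apply: (hpair i j _ P hh); [rewrite eq_sym| split].
    have iU : i \in ~: U.
      by rewrite !inE; apply/negP => hu; exact: (unit_not_prime hPp hu hi).
    rewrite /E mem_primes hp prodpos /=.
    apply: dvdn_trans (dvdn_trans pe he_i) _.
    by rewrite (bigD1 i) //= dvdn_mulr.
  have hall : forall j, (e %| absz (d j))%N.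
    by move=> j; apply: (notP P hPp e he') => hj; apply: none; exists j.
  have e1 : (e %| 1)%N.
    apply: (proj2 he) => k [b [hb nb0]]; apply: NNPP => nD.
    apply: nb0; apply: (gen_deg hG (D := fun k => (e %| absz k)%N) hgen hGx (@zeroI_ideal B)) hb nD.
    + exact: dvdn0.
    + by move=> j k'; exact: dvd_abs_add.
    + by move=> j; left.
  move: e1; rewrite dvdn1 => /eqP e1; move: pe; rewrite e1 dvdn1 => /eqP p1.
  by move: hp; rewrite p1.
Qed.
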